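(* Let $p,q\geq 2$ be relatively prime integers. For every $c\in A_{pq}^{\mathbb{Z}}$ and all $k,i\in\mathbb{Z}$, the value $F_{p,q}^k(c)(i)$ is uniquely determined by the three values $F_{p,q}^{k-1}(c)(i+1)$, $F_{p,q}^{k}(c)(i+1)$ and $F_{p,q}^{k+1}(c)(i+1)$; that is, if $c,c'\in A_{pq}^{\mathbb{Z}}$ satisfy $F_{p,q}^{m}(c)(i+1)=F_{p,q}^{m}(c')(i+1)$ for $m\in\{k-1,k,k+1\}$, then $F_{p,q}^k(c)(i)=F_{p,q}^k(c')(i)$.
   Context: For an integer $n>1$, $A_n=\{0,1,\dots,n-1\}$. For relatively prime integers $p,q\geq2$ define $g_{p,q}:A_{pq}\times A_{pq}\to A_{pq}$ by writing $x=x_1q+x_0$, $y=y_1q+y_0$ with $x_0,y_0\in A_q$, $x_1,y_1\in A_p$ (uniquely), and setting $g_{p,q}(x,y)=x_0p+y_1$. Define $F_{p,q}:A_{pq}^{\mathbb{Z}}\to A_{pq}^{\mathbb{Z}}$ by $F_{p,q}(c)(i)=g_{p,q}\big(g_{p,q}(c(i-1),c(i)),\,g_{p,q}(c(i),c(i+1))\big)$. The map $F_{p,q}$ is a bijection whose inverse is $F_{q,p}$ (defined by the same formulas with the roles of $p$ and $q$ exchanged); $F_{p,q}^k$ for negative $k$ denotes iterates of the inverse. *)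

(* Defs.v *)
From mathcomp Require Import all_boot all_order all_algebra.
Set Implicit Arguments. Unset Strict Implicit. Unset Printing Implicit Defensive.
Import Order.TTheory GRing.Theory Num.Theory.

(* Configurations: maps Z -> A_{pq}, where A_n = {0,...,n-1} is represented by
   naturals (range condition stated separately via [config_in]). *)
Definition config := int -> nat.

Definition config_in (n : nat) (c : config) : Prop := forall i : int, c i < n.

Definition g (p q : nat) (x y : nat) : nat := (x %% q) * p + y %/ q.

Definition F (p q : nat) (c : config) : config :=
  fun i => g p q (g p q (c (i - 1)%R) (c i)) (g p q (c i) (c (i + 1)%R)).

(* F_{p,q}^k for k : int; negative iterates are iterates of the inverse F_{q,p} *)
Definition Fiter (p q : nat) (k : int) (c : config) : config :=
  match k with
  | Posz n => iter n (F p q) c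
  | Negz n => iter n.+1 (F q p) c
  end.

(* Main.v *)
Require Import Defs.
From mathcomp Require Import all_boot all_order all_algebra.
From mathcomp Require Import zify.
From Stdlib Require Import FunctionalExtensionality.
Import Order.TTheory GRing.Theory Num.Theory.
Local Open Scope ring_scope.

Lemma g_lt (p q x y : nat) : (0 < q)%N -> (y < p * q)%N -> (g p q x y < p * q)%N.
Proof. rewrite /g => *; nia. Qed.

Lemma g_modp (p q x y : nat) : (0 < p)%N -> (0 < q)%N -> (y < p * q)%N ->
  (g p q x y %% p = y %/ q)%N.
Proof.
move=> hp hq hy; rewrite /g modnMDl modn_small //.
by rewrite ltn_divLR // mulnC.
Qed.

Lemma g_divp (p q x y : nat) : (0 < p)%N -> (0 < q)%N -> (y < p * q)%N ->
  (g p q x y %/ p = x %% q)%N.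
Proof.
move=> hp hq hy; rewrite /g divnMDl // divn_small ?addn0 //.
by rewrite ltn_divLR // mulnC.
Qed.

Lemma crt (p q x y : nat) : coprime p q -> (x < p * q)%N -> (y < p * q)%N ->
  (x %% p = y %% p)%N -> (x %% q = y %% q)%N -> x = y.
Proof.
move=> co hx hy h1 h2.
have : (x == y %[mod p * q])%N by rewrite chinese_remainder // h1 h2 !eqxx.
by rewrite !modn_small // => /eqP.
Qed.

Lemma F_valid (p q : nat) c : (0 < p)%N -> (0 < q)%N -> config_in (p * q) c ->
  config_in (p * q) (F p q c).
Proof. by move=> hp hq hc i; rewrite /F; apply: g_lt => //; apply: g_lt. Qed.

Lemma ggi (p q x y z : nat) : (0 < p)%N -> (0 < q)%N -> (y < p * q)%N -> (z < p * q)%N ->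
  g p q (g q p x y) (g q p y z) = y.
Proof.
move=> hp hq hy hz.
rewrite /g.
have -> : (((x %% p) * q + y %/ p) %% q = y %/ p)%N.
  by rewrite modnMDl modn_small // ltn_divLR // mulnC.
have -> : (((y %% p) * q + z %/ p) %/ q = y %% p)%N.
  by rewrite divnMDl // divn_small ?addn0 // ltn_divLR // mulnC.
by rewrite -divn_eq.
Qed.

Lemma FG (p q : nat) a : (0 < p)%N -> (0 < q)%N -> config_in (p * q) a ->
  F p q (F q p a) = a.
Proof.
move=> hp hq ha; apply: functional_extensionality => i.
have ha' : config_in (q * p) a by rewrite mulnC.
have hgv : forall j, (g q p (a j) (a (j + 1)%R) < p * q)%N.
  by move=> j; rewrite mulnC; apply: g_lt.
have hgv' : forall j, (g q p (a (j - 1)%R) (a j) < p * q)%N.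
  by move=> j; move: (hgv (j - 1)); rewrite subrK.
have key : forall j, g p q (F q p a (j - 1)) (F q p a j) = g q p (a (j - 1)) (a j).
  by move=> j; rewrite /F subrK ggi ?hgv ?hgv' //.
have key2 := key (i + 1); rewrite addrK in key2.
rewrite {1}/F key key2 ggi //.
Qed.

Section Local.
Variables (p q : nat) (hp : (0 < p)%N) (hq : (0 < q)%N).

Lemma HA c j : config_in (p * q) c ->
  (F p q c j %% p = g p q (c j) (c (j + 1)%R) %/ q)%N.
Proof. by move=> hc; rewrite /F g_modp // g_lt. Qed.

Lemma HB c j : config_in (p * q) c ->
  (g p q (c j) (c (j + 1)%R) %% q = F p q c (j + 1)%R %/ p)%N.
Proof. by move=> hc; rewrite /F g_divp ?addrK // g_lt. Qed.

Lemma HC c j : config_in (p * q) c ->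
  (g p q (c j) (c (j + 1)%R) %% p = c (j + 1)%R %/ q)%N.
Proof. by move=> hc; rewrite g_modp. Qed.

Lemma HD c j : config_in (p * q) c ->
  (g p q (c j) (c (j + 1)%R) %/ p = c j %% q)%N.
Proof. by move=> hc; rewrite g_divp. Qed.

Lemma local (b b' : config) i : coprime p q ->
  config_in (p * q) b -> config_in (p * q) b' ->
  b (i + 1) = b' (i + 1) -> F p q b (i + 1) = F p q b' (i + 1) ->
  F p q (F p q b) (i + 1) = F p q (F p q b') (i + 1) ->
  F p q b i = F p q b' i.
Proof.
move=> co hb hb' e0 e1 e2.
have ha := F_valid _ _ _ hp hq hb; have ha' := F_valid _ _ _ hp hq hb'.
have ed : g p q (b i) (b (i + 1)) = g p q (b' i) (b' (i + 1)).
  apply: (@crt p q _ _ co); rewrite ?g_lt //.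
  - by rewrite !HC // e0.
  - by rewrite !HB // e1.
have ef : g p q (F p q b i) (F p q b (i + 1)) = g p q (F p q b' i) (F p q b' (i + 1)).
  apply: (@crt p q _ _ co); rewrite ?g_lt //.
  - by rewrite !HC // e1.
  - by rewrite !HB // e2.
apply: (@crt p q _ _ co) => //.
- by rewrite !HA // ed.
- by rewrite -!(HD _ i) // ef.
Qed.
End Local.

Lemma iter_valid p q n c : (0 < p)%N -> (0 < q)%N -> config_in (p * q) c ->
  config_in (p * q) (iter n (F p q) c).
Proof. by move=> hp hq hc; elim: n => //= n IH; apply: F_valid. Qed.

Lemma iter_validG p q n c : (0 < p)%N -> (0 < q)%N -> config_in (p * q) c ->
  config_in (p * q) (iter n (F q p) c).
Proof.
move=> hp hq hc; rewrite mulnC; apply: iter_valid => //; by rewrite mulnC.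
Qed.

Lemma validG p q c : (0 < p)%N -> (0 < q)%N -> config_in (p * q) c ->
  config_in (p * q) (F q p c).
Proof. by move=> hp hq hc; rewrite mulnC; apply: F_valid => //; rewrite mulnC. Qed.

Lemma decomp p q c k : (0 < p)%N -> (0 < q)%N -> config_in (p * q) c ->
  exists b, [/\ config_in (p * q) b, Fiter p q (k - 1) c = b,
    Fiter p q k c = F p q b & Fiter p q (k + 1) c = F p q (F p q b)].
Proof.
move=> hp hq hc.
case: k => [[|n]|n].
- exists (F q p c); split.
  + exact: validG.
  + by [].
  + by rewrite FG.
  + by rewrite FG.
- exists (iter n (F p q) c); split.
  + exact: iter_valid.
  + by have -> : (Posz n.+1 - 1 = Posz n) by lia.
  + by [].
  + by have -> : (Posz n.+1 + 1 = Posz n.+2) by lia.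
- set y := iter n (F q p) c.
  have hy : config_in (p * q) y by apply: iter_validG.
  exists (F q p (F q p y)); split.
  + by apply: validG => //; apply: validG.
  + by have -> : (Negz n - 1 = Negz n.+1) by lia.
  + by rewrite FG //; apply: validG.
  + rewrite FG //; last by apply: validG.
    rewrite FG //.
    case: n @y hy => [|n] y hy.
    * by have -> : (Negz 0 + 1 = 0) by lia.
    * by have -> : (Negz n.+1 + 1 = Negz n) by lia.
Qed.

Theorem proposition1 (p q : nat) (hp : (2 <= p)%N) (hq : (2 <= q)%N)
  (hpq : coprime p q) (c c' : config)
  (hc : config_in (p * q) c) (hc' : config_in (p * q) c') (k i : int) :
  Fiter p q (k - 1) c (i + 1) = Fiter p q (k - 1) c' (i + 1) ->
  Fiter p q k c (i + 1) = Fiter p q k c' (i + 1) ->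
  Fiter p q (k + 1) c (i + 1) = Fiter p q (k + 1) c' (i + 1) ->
  Fiter p q k c i = Fiter p q k c' i.
Proof.
have hp0 : (0 < p)%N by apply: leq_trans hp.
have hq0 : (0 < q)%N by apply: leq_trans hq.
have [b [hb -> -> ->]] := decomp _ _ _ k hp0 hq0 hc.
have [b' [hb' -> -> ->]] := decomp _ _ _ k hp0 hq0 hc'.
exact: local.
Qed.
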